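(* For each integer $n\ge1$, let $g_n(x)=(1+x^2)^{-n}$ and $\widehat{g_n}(\omega)=\int_{\mathbb R}g_n(x)e^{i\omega x}dx$. Then $$K_n:=\int_0^\infty\omega^3|\widehat{g_n}(\omega)|^2\,d\omega=\frac{2\pi^2n^2}{16^n}\binom{2n-1}{n}\binom{2n+1}{n}.$$ *)

(* Defs.v *)
From Stdlib Require Export Reals.
Open Scope R_scope.

Definition IntegralTo (f : R -> R) (a b I : R) : Prop :=
  exists pr : Riemann_integrable f a b, RiemannInt pr = I.

Definition ImproperInt0 (f : R -> R) (L : R) : Prop :=
  forall eps, 0 < eps -> exists M, forall b, M <= b ->
    exists I, IntegralTo f 0 b I /\ Rabs (I - L) < eps.

Definition ImproperIntR (f : R -> R) (L : R) : Prop :=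
  forall eps, 0 < eps -> exists M, forall a b, a <= - M -> M <= b ->
    exists I, IntegralTo f a b I /\ Rabs (I - L) < eps.

Definition g (n : nat) (x : R) : R := / (1 + x ^ 2) ^ n.

(* Real and imaginary parts of  \hat g_n(w) = int_R g_n(x) e^{i w x} dx
   = int_R g_n(x) cos(w x) dx + i int_R g_n(x) sin(w x) dx. *)
Definition IsFourierRe (n : nat) (w re : R) : Prop :=
  ImproperIntR (fun x => g n x * cos (w * x)) re.
Definition IsFourierIm (n : nat) (w im : R) : Prop :=
  ImproperIntR (fun x => g n x * sin (w * x)) im.

(* Main.v *)
Require Import Defs.
From Stdlib Require Import Reals Lra Lia Psatz ClassicalEpsilon FunctionalExtensionality.
From Coquelicot Require Import Coquelicot.
Open Scope R_scope.


Lemma opp1 : 1 + 0 = 1. Proof. ring. Qed.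

Lemma one_plus_sq_pos x : 0 < 1 + x ^ 2.
Proof. nra. Qed.

Lemma g_pos m x : 0 < g m x.
Proof. unfold g. apply Rinv_0_lt_compat, pow_lt, one_plus_sq_pos. Qed.

Lemma g_S m x : g (S m) x = g m x * g 1 x.
Proof.
  unfold g. rewrite <- tech_pow_Rmult, pow_1.
  pose proof (one_plus_sq_pos x). assert ((1+x^2)^m <> 0) by (apply pow_nonzero; lra).
  field. split; lra.
Qed.

Lemma g_le_1 m x : g m x <= 1.
Proof.
  unfold g. rewrite <- (Rinv_1) at 2. apply Rinv_le_contravar; [lra|].
  apply pow_R1_Rle. nra.
Qed.

Lemma g_mono m x : (1 <= m)%nat -> g m x <= g 1 x.
Proof.
  intros Hm. induction Hm as [|k Hk IH]. lra.
  rewrite g_S. pose proof (g_le_1 k x). pose proof (g_pos 1 x). pose proof (g_pos k x). nra.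
Qed.

Lemma g1_eq x : g 1 x = / (1 + x^2).
Proof. unfold g. now rewrite pow_1. Qed.

Lemma g_rel m x : x ^ 2 * g (S m) x = g m x - g (S m) x.
Proof.
  rewrite g_S, g1_eq. field. pose proof (one_plus_sq_pos x). lra.
Qed.

Lemma xg_le m x : (2 <= m)%nat -> Rabs x * g m x <= g 1 x.
Proof.
  intros Hm. destruct m as [|[|m]]; try lia.
  rewrite g_S. pose proof (g_mono (S m) x ltac:(lia)).
  rewrite g1_eq in *. pose proof (one_plus_sq_pos x).
  pose proof (g_pos (S m) x).
  assert (Rabs x <= 1 + x^2).
  { unfold Rabs; destruct (Rcase_abs x); nra. }
  assert (0 < / (1 + x^2)) by (apply Rinv_0_lt_compat; lra).
  assert (Rabs x * / (1 + x^2) <= 1).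
  { apply (Rmult_le_reg_r (1 + x^2)); [lra|]. rewrite Rmult_assoc, Rinv_l; lra. }
  pose proof (Rabs_pos x). nra.
Qed.

Lemma x2g_le m x : (2 <= m)%nat -> x^2 * g m x <= g 1 x.
Proof.
  intros Hm. destruct m as [|m]; try lia. rewrite g_rel.
  pose proof (g_mono m x ltac:(lia)). pose proof (g_pos (S m) x). lra.
Qed.

Lemma g_derive m x : is_derive (g m) x (- 2 * INR m * x * g (S m) x).
Proof.
  unfold g. auto_derive.
  - apply pow_nonzero. pose proof (one_plus_sq_pos x). lra.
  - pose proof (one_plus_sq_pos x). destruct m. simpl. field. lra.
    rewrite <- tech_pow_Rmult. simpl pred. simpl. field. split; [|lra].
    apply pow_nonzero. lra.
Qed.


Lemma exRI (f : R -> R) a b : (forall x, continuous f x) -> ex_RInt f a b.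
Proof. intros H. apply (ex_RInt_continuous (V:=R_CompleteNormedModule)). intros; apply H. Qed.

Lemma g_cont m x : continuous (g m) x.
Proof. apply (ex_derive_continuous (K:=R_AbsRing) (V:=R_NormedModule)). eexists. apply g_derive. Qed.

Lemma RInt_g1 a b : RInt (g 1) a b = atan b - atan a.
Proof.
  apply is_RInt_unique.
  apply (is_RInt_derive atan (g 1)).
  - intros x _. apply is_derive_Reals. rewrite g1_eq. apply derivable_pt_lim_atan.
  - intros x _. apply g_cont.
Qed.

Lemma RInt_abs_le (f h : R -> R) u v : u <= v -> (forall x, continuous f x) -> (forall x, continuous h x) ->
  (forall x, Rabs (f x) <= h x) -> Rabs (RInt f u v) <= RInt h u v.
Proof.
  intros Huv Hf Hh Hb.
  eapply Rle_trans. apply abs_RInt_le; auto. apply exRI; auto.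
  apply RInt_le; auto.
  - apply exRI. intros. apply (continuous_comp f Rabs). apply Hf.
    apply continuous_Rabs.
  - apply exRI; auto.
Qed.

Lemma RInt_dom (f : R -> R) C u v : u <= v -> (forall x, continuous f x) ->
  (forall x, Rabs (f x) <= C * g 1 x) -> Rabs (RInt f u v) <= C * (atan v - atan u).
Proof.
  intros Huv Hf Hb. rewrite <- RInt_g1.
  replace (C * RInt (g 1) u v) with (RInt (fun x => C * g 1 x) u v).
  2: { exact (RInt_scal (V:=R_CompleteNormedModule) (g 1) u v C (exRI _ _ _ (g_cont 1))). }
  apply RInt_abs_le; auto.
  intros x. apply (continuous_scal_r C (g 1) x). apply g_cont.
Qed.

Lemma atan_le_id y : 0 <= y -> atan y <= y.
Proof.
  intros Hy. assert (E1 : RInt (g 1) 0 y = atan y) by (rewrite RInt_g1, atan_0; lra).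
  rewrite <- E1.
  assert (E : RInt (fun _ => 1) 0 y = y).
  { rewrite RInt_const. unfold scal; simpl. unfold mult; simpl. ring. }
  rewrite <- E at 2.
  apply RInt_le; auto. apply exRI, g_cont. apply exRI; intros; apply continuous_const.
  intros x _. apply g_le_1.
Qed.

Lemma tail y : 0 < y -> PI / 2 - atan y <= / y.
Proof.
  intros Hy. rewrite <- atan_inv by lra. apply atan_le_id.
  left; apply Rinv_0_lt_compat; lra.
Qed.

Lemma tailR (f : R -> R) C M u v : 0 <= C -> 0 < M -> M <= u -> M <= v -> (forall x, continuous f x) ->
  (forall x, Rabs (f x) <= C * g 1 x) -> Rabs (RInt f u v) <= C / M.
Proof.
  intros HC HM Hu Hv Hf Hb.
  assert (K : forall p q, M <= p -> p <= q -> Rabs (RInt f p q) <= C / M).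
  { intros p q Hp Hq. eapply Rle_trans. apply RInt_dom; auto.
    pose proof (tail M HM). pose proof (atan_bound q).
    assert (atan M <= atan p).
    { destruct (Req_dec M p). subst; lra. left; apply atan_increasing; lra. }
    unfold Rdiv. apply Rmult_le_compat_l; auto. lra. }
  destruct (Rle_lt_dec u v). apply K; auto.
  rewrite <- opp_RInt_swap by (apply exRI; auto). unfold opp; simpl.
  rewrite Rabs_Ropp. apply K; lra.
Qed.

Lemma tailL (f : R -> R) C M u v : 0 <= C -> 0 < M -> u <= - M -> v <= - M -> (forall x, continuous f x) ->
  (forall x, Rabs (f x) <= C * g 1 x) -> Rabs (RInt f u v) <= C / M.
Proof.
  intros HC HM Hu Hv Hf Hb.
  assert (K : forall p q, p <= q -> q <= - M -> Rabs (RInt f p q) <= C / M).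
  { intros p q Hp Hq. eapply Rle_trans. apply RInt_dom; auto.
    pose proof (tail M HM). pose proof (atan_bound p).
    assert (atan q <= atan (- M)).
    { destruct (Req_dec q (-M)). subst; lra. left; apply atan_increasing; lra. }
    rewrite atan_opp in H1.
    unfold Rdiv. apply Rmult_le_compat_l; auto. lra. }
  destruct (Rle_lt_dec u v). apply K; auto.
  rewrite <- opp_RInt_swap by (apply exRI; auto). unfold opp; simpl.
  rewrite Rabs_Ropp. apply K; lra.
Qed.

Lemma RInt_cauchy (f : R -> R) C M a b a' b' : 0 <= C -> 0 < M -> (forall x, continuous f x) ->
  (forall x, Rabs (f x) <= C * g 1 x) ->
  a <= - M -> a' <= - M -> M <= b -> M <= b' ->
  Rabs (RInt f a b - RInt f a' b') <= 2 * C / M.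
Proof.
  intros HC HM Hf Hb Ha Ha' Hb1 Hb'.
  assert (E : RInt f a b - RInt f a' b' = RInt f a a' + RInt f b' b).
  { assert (forall p q r, RInt f p q + RInt f q r = RInt f p r).
    { intros. apply (RInt_Chasles f); apply exRI; auto. }
    rewrite <- (H a a' b), <- (H a' b' b). ring. }
  rewrite E. eapply Rle_trans. apply Rabs_triang.
  pose proof (tailL f C M a a' HC HM Ha Ha' Hf Hb).
  pose proof (tailR f C M b' b HC HM Hb' Hb1 Hf Hb). lra.
Qed.

Definition LimR (F : R -> R -> R) (L : R) : Prop :=
  forall eps, 0 < eps -> exists M, forall a b, a <= - M -> M <= b -> Rabs (F a b - L) < eps.

Lemma LimR_exists (f : R -> R) C : 0 <= C -> (forall x, continuous f x) ->
  (forall x, Rabs (f x) <= C * g 1 x) -> exists L, LimR (fun a b => RInt f a b) L.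
Proof.
  intros HC Hf Hb.
  set (u := fun k : nat => RInt f (- INR k) (INR k)).
  assert (Hc : Cauchy_crit u).
  { intros eps Heps.
    destruct (archimed_cor1 (eps / (2 * C + 1))) as [N [HN HN0]].
    { apply Rdiv_lt_0_compat; lra. }
    exists N. intros p q Hp Hq. unfold Rdist, u.
    assert (0 < INR N) by (apply lt_0_INR; lia).
    assert (INR N <= INR p) by (apply le_INR; lia).
    assert (INR N <= INR q) by (apply le_INR; lia).
    eapply Rle_lt_trans. apply (RInt_cauchy f C (INR N)); auto; lra.
    apply (Rmult_lt_compat_r (2*C+1)) in HN; [|lra].
    unfold Rdiv in *. rewrite Rmult_assoc, Rinv_l in HN by lra.
    assert (2 * C * / INR N <= (2*C+1) * / INR N).
    { apply Rmult_le_compat_r. left; apply Rinv_0_lt_compat; lra. lra. }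
    lra. }
  destruct (Rcomplete.R_complete u Hc) as [l Hl].
  exists l. intros eps Heps.
  destruct (archimed_cor1 (eps / (2 * (2 * C + 1)))) as [N [HN HN0]].
  { apply Rdiv_lt_0_compat; lra. }
  destruct (Hl (eps / 2)) as [N2 HN2]. lra.
  exists (INR N). intros a b Ha Hb'.
  assert (0 < INR N) by (apply lt_0_INR; lia).
  set (k := (N + N2)%nat).
  assert (INR N <= INR k) by (apply le_INR; lia).
  pose proof (HN2 k ltac:(lia)). unfold Rdist, u in H1.
  pose proof (RInt_cauchy f C (INR N) a b (- INR k) (INR k) HC H Hf Hb Ha ltac:(lra) Hb' H0).
  replace (RInt f a b - l) with ((RInt f a b - RInt f (- INR k) (INR k)) +
     (RInt f (- INR k) (INR k) - l)) by ring.
  eapply Rle_lt_trans. apply Rabs_triang.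
  assert (2 * C / INR N < eps / 2).
  { apply (Rmult_lt_compat_r (2*(2*C+1))) in HN; [|lra].
    unfold Rdiv in *. rewrite Rmult_assoc, Rinv_l in HN by lra.
    assert (0 < / INR N) by (apply Rinv_0_lt_compat; lra). nra. }
  lra.
Qed.


Lemma LimR_unique F L1 L2 : LimR F L1 -> LimR F L2 -> L1 = L2.
Proof.
  intros H1 H2. apply Rminus_diag_uniq. apply Rabs_eq_0.
  apply Rle_antisym; [|apply Rabs_pos].
  apply Rnot_lt_le. intros Hp. set (e := Rabs (L1 - L2) / 2).
  destruct (H1 e) as [M1 HM1]. unfold e; lra.
  destruct (H2 e) as [M2 HM2]. unfold e; lra.
  set (M := Rabs M1 + Rabs M2).
  pose proof (Rle_abs M1). pose proof (Rle_abs M2). pose proof (Rabs_pos M1). pose proof (Rabs_pos M2).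
  specialize (HM1 (-M) M ltac:(unfold M; lra) ltac:(unfold M; lra)).
  specialize (HM2 (-M) M ltac:(unfold M; lra) ltac:(unfold M; lra)).
  pose proof (Rabs_triang (L1 - F (-M) M) (F (-M) M - L2)) as HT.
  replace (L1 - F (- M) M + (F (- M) M - L2)) with (L1 - L2) in HT by ring.
  rewrite (Rabs_minus_sym L1 (F (-M) M)) in HT. unfold e in *. lra.
Qed.

Lemma LimR_plus F G L1 L2 : LimR F L1 -> LimR G L2 -> LimR (fun a b => F a b + G a b) (L1 + L2).
Proof.
  intros H1 H2 eps He.
  destruct (H1 (eps/2)) as [M1 HM1]. lra. destruct (H2 (eps/2)) as [M2 HM2]. lra.
  exists (Rabs M1 + Rabs M2). intros a b Ha Hb.
  pose proof (Rle_abs M1). pose proof (Rle_abs M2). pose proof (Rabs_pos M1). pose proof (Rabs_pos M2).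
  specialize (HM1 a b ltac:(lra) ltac:(lra)). specialize (HM2 a b ltac:(lra) ltac:(lra)).
  replace (F a b + G a b - (L1 + L2)) with ((F a b - L1) + (G a b - L2)) by ring.
  pose proof (Rabs_triang (F a b - L1) (G a b - L2)). lra.
Qed.

Lemma LimR_scal c F L : LimR F L -> LimR (fun a b => c * F a b) (c * L).
Proof.
  intros H eps He.
  destruct (H (eps / (Rabs c + 1))) as [M HM]. apply Rdiv_lt_0_compat; [lra|].
  pose proof (Rabs_pos c); lra.
  exists M. intros a b Ha Hb. specialize (HM a b Ha Hb).
  replace (c * F a b - c * L) with (c * (F a b - L)) by ring. rewrite Rabs_mult.
  pose proof (Rabs_pos c). pose proof (Rabs_pos (F a b - L)).
  apply (Rmult_lt_compat_r (Rabs c + 1)) in HM; [|lra].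
  unfold Rdiv in HM. rewrite Rmult_assoc, Rinv_l in HM by lra. nra.
Qed.

Lemma LimR_ext F G L : (forall a b, F a b = G a b) -> LimR F L -> LimR G L.
Proof. intros E H eps He. destruct (H eps He) as [M HM]. exists M. intros. rewrite <- E. auto. Qed.

Lemma LimR_ext' F G L1 L2 : (forall a b, F a b = G a b) -> L1 = L2 -> LimR F L1 -> LimR G L2.
Proof. intros E E2 H. subst. eapply LimR_ext; eauto. Qed.

Lemma LimR_bound F L K : (forall a b, a <= 0 -> 0 <= b -> Rabs (F a b) <= K) -> LimR F L -> Rabs L <= K.
Proof.
  intros HB H. apply Rnot_lt_le. intros Hc.
  destruct (H (Rabs L - K)) as [M HM]. lra.
  specialize (HM (- Rabs M) (Rabs M)). pose proof (Rle_abs M). pose proof (Rabs_pos M).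
  specialize (HM ltac:(lra) ltac:(lra)). specialize (HB (- Rabs M) (Rabs M) ltac:(lra) ltac:(lra)).
  pose proof (Rabs_triang_inv L (F (- Rabs M) (Rabs M))).
  rewrite <- Rabs_Ropp in HM. replace (- (F (- Rabs M) (Rabs M) - L)) with (L - F (- Rabs M) (Rabs M)) in HM by ring.
  lra.
Qed.

Lemma LimR_boundary (h : R -> R) C : (forall x, Rabs (h x * x) <= C) -> LimR (fun a b => h b - h a) 0.
Proof.
  intros Hh eps He.
  assert (HC : 0 <= C) by (specialize (Hh 0); pose proof (Rabs_pos (h 0 * 0)); lra).
  exists (2 * (C + 1) / eps). intros a b Ha Hb.
  assert (HM : 0 < 2 * (C + 1) / eps) by (apply Rdiv_lt_0_compat; lra).
  assert (K : forall x, 2 * (C + 1) / eps <= Rabs x -> Rabs (h x) < eps / 2).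
  { intros x Hx. assert (0 < Rabs x) by lra.
    specialize (Hh x). rewrite Rabs_mult in Hh.
    assert (Rabs (h x) <= C / Rabs x).
    { apply (Rmult_le_reg_r (Rabs x)); auto. unfold Rdiv. rewrite Rmult_assoc, Rinv_l; lra. }
    assert (C / Rabs x < eps / 2).
    { apply (Rmult_lt_reg_r (Rabs x)); auto. unfold Rdiv. rewrite Rmult_assoc, Rinv_l by lra.
      apply (Rmult_le_compat_r eps) in Hx; [|lra]. unfold Rdiv in Hx.
      rewrite Rmult_assoc, Rinv_l in Hx by lra. nra. }
    lra. }
  pose proof (K b ltac:(rewrite Rabs_right; lra)).
  pose proof (K a ltac:(rewrite Rabs_left; lra)).
  rewrite Rminus_0_r. pose proof (Rabs_triang (h b) (- h a)). rewrite Rabs_Ropp in H1.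
  unfold Rminus. lra.
Qed.

Lemma Improper_of_LimR (f : R -> R) L : (forall x, continuous f x) ->
  LimR (fun a b => RInt f a b) L -> ImproperIntR f L.
Proof.
  intros Hc H eps He. destruct (H eps He) as [M HM]. exists M. intros a b Ha Hb.
  exists (RInt f a b). split; auto.
  exists (ex_RInt_Reals_0 _ _ _ (exRI f a b Hc)). symmetry. apply RInt_Reals.
Qed.

Lemma LimR_of_Improper (f : R -> R) L : ImproperIntR f L -> LimR (fun a b => RInt f a b) L.
Proof.
  intros H eps He. destruct (H eps He) as [M HM]. exists M. intros a b Ha Hb.
  destruct (HM a b Ha Hb) as [I [[pr Hpr] HI]]. rewrite (RInt_Reals f a b pr), Hpr. auto.
Qed.

Definition A (m : nat) (w : R) : R :=
  epsilon (inhabits 0) (fun L => LimR (fun a b => RInt (fun x => g m x * cos (w * x)) a b) L).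
Definition B (m : nat) (w : R) : R :=
  epsilon (inhabits 0) (fun L => LimR (fun a b => RInt (fun x => x * g m x * sin (w * x)) a b) L).

Lemma pow_sq_nz x m : (1 + x * (x * 1)) ^ m <> 0.
Proof. apply pow_nonzero. pose proof (one_plus_sq_pos x). simpl in H. lra. Qed.

Lemma one_sq_nz x : 1 + x * (x * 1) <> 0.
Proof. pose proof (one_plus_sq_pos x). simpl in H. lra. Qed.

Ltac nz_tac := repeat (first [ exact I | split | apply pow_sq_nz | apply one_sq_nz |
  apply Rmult_integral_contrapositive_currified ]).

Ltac cont_tac := apply (ex_derive_continuous (K:=R_AbsRing) (V:=R_NormedModule));
  unfold g; auto_derive; nz_tac.

Lemma A_spec m w : (1 <= m)%nat -> LimR (fun a b => RInt (fun x => g m x * cos (w * x)) a b) (A m w).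
Proof.
  intros Hm. unfold A. apply epsilon_spec.
  apply (LimR_exists _ 1). lra. intros; cont_tac.
  intros x. rewrite Rabs_mult. pose proof (COS_bound (w*x)). pose proof (g_pos m x).
  pose proof (g_mono m x Hm). rewrite (Rabs_right (g m x)) by lra.
  assert (Rabs (cos (w*x)) <= 1) by (unfold Rabs; destruct Rcase_abs; lra).
  pose proof (Rabs_pos (cos (w*x))).
  apply Rle_trans with (g m x * 1). apply Rmult_le_compat_l; lra. lra.
Qed.

Lemma B_spec m w : (2 <= m)%nat -> LimR (fun a b => RInt (fun x => x * g m x * sin (w * x)) a b) (B m w).
Proof.
  intros Hm. unfold B. apply epsilon_spec.
  apply (LimR_exists _ 1). lra. intros; cont_tac.
  intros x. rewrite Rabs_mult, Rabs_mult. pose proof (SIN_bound (w*x)). pose proof (g_pos m x).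
  pose proof (xg_le m x Hm). rewrite (Rabs_right (g m x)) by lra.
  assert (Rabs (sin (w*x)) <= 1) by (unfold Rabs; destruct Rcase_abs; lra).
  pose proof (Rabs_pos (sin (w*x))). pose proof (Rabs_pos x).
  apply Rle_trans with (Rabs x * g m x * 1). apply Rmult_le_compat_l; auto.
  apply Rmult_le_pos; lra. lra.
Qed.

Lemma RInt_odd (f : R -> R) b : (forall x, continuous f x) -> (forall x, f (- x) = - f x) ->
  RInt f (- b) b = 0.
Proof.
  intros Hc Ho.
  assert (H' : is_RInt f (- b) (- - b) (RInt f (-b) b)).
  { rewrite Ropp_involutive. apply (RInt_correct (V:=R_CompleteNormedModule)). apply exRI; auto. }
  apply (is_RInt_comp_opp (V:=R_NormedModule)) in H'.
  apply (is_RInt_ext _ f) in H'.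
  2: { intros x _. change (opp (f (- x))) with (- f (- x)). rewrite Ho. exact (Ropp_involutive (f x)). }
  apply (is_RInt_unique (V:=R_CompleteNormedModule)) in H'.
  assert (E2 : opp (RInt f (- b) b) = RInt f b (- b)) by (apply opp_RInt_swap; apply exRI; auto).
  change (opp (RInt f (- b) b)) with (- (RInt f (- b) b)) in E2.
  lra.
Qed.

Lemma Im_spec m w : (1 <= m)%nat -> LimR (fun a b => RInt (fun x => g m x * sin (w * x)) a b) 0.
Proof.
  intros Hm.
  destruct (LimR_exists (fun x => g m x * sin (w * x)) 1) as [L HL]. lra. intros; cont_tac.
  { intros x. rewrite Rabs_mult. pose proof (SIN_bound (w*x)). pose proof (g_pos m x).
    pose proof (g_mono m x Hm). rewrite (Rabs_right (g m x)) by lra.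
    assert (Rabs (sin (w*x)) <= 1) by (unfold Rabs; destruct Rcase_abs; lra).
    pose proof (Rabs_pos (sin (w*x))).
    apply Rle_trans with (g m x * 1). apply Rmult_le_compat_l; lra. lra. }
  replace 0 with L; auto.
  apply Rminus_diag_uniq. apply Rabs_eq_0. apply Rle_antisym; [|apply Rabs_pos].
  apply Rnot_lt_le. intros Hp. destruct (HL _ Hp) as [M HM].
  specialize (HM (- Rabs M) (Rabs M)). pose proof (Rle_abs M).
  rewrite RInt_odd in HM. rewrite Rminus_0_l, Rabs_Ropp, Rminus_0_r in HM.
  specialize (HM ltac:(lra) ltac:(lra)). lra.
  intros; cont_tac.
  intros x. unfold g. replace ((- x)^2) with (x^2) by ring. replace (w * - x) with (- (w*x)) by ring.
  rewrite sin_neg. ring.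
Qed.


Lemma RInt_lin2 (f1 f2 : R -> R) c1 c2 a b : (forall x, continuous f1 x) -> (forall x, continuous f2 x) ->
  RInt (fun x => c1 * f1 x + c2 * f2 x) a b = c1 * RInt f1 a b + c2 * RInt f2 a b.
Proof.
  intros H1 H2. apply (is_RInt_unique (V:=R_CompleteNormedModule)).
  apply (is_RInt_plus (V:=R_NormedModule) (fun x => c1 * f1 x) (fun x => c2 * f2 x)).
  - apply (is_RInt_scal (V:=R_NormedModule) f1). apply (RInt_correct (V:=R_CompleteNormedModule)), exRI; auto.
  - apply (is_RInt_scal (V:=R_NormedModule) f2). apply (RInt_correct (V:=R_CompleteNormedModule)), exRI; auto.
Qed.

Lemma FTC (F f : R -> R) a b : (forall x, is_derive F x (f x)) -> (forall x, continuous f x) ->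
  RInt f a b = F b - F a.
Proof.
  intros HD Hc. apply (is_RInt_unique (V:=R_CompleteNormedModule)).
  apply (is_RInt_derive (V:=R_CompleteNormedModule) F f); intros; auto.
Qed.

Lemma absx_g1 x : Rabs x * g 1 x <= 1.
Proof.
  rewrite g1_eq. pose proof (one_plus_sq_pos x).
  assert (Rabs x <= 1 + x^2) by (unfold Rabs; destruct (Rcase_abs x); nra).
  apply (Rmult_le_reg_r (1 + x^2)); auto. rewrite Rmult_assoc, Rinv_l; lra.
Qed.

Lemma x2_g1 x : x ^ 2 * g 1 x <= 1.
Proof.
  rewrite g1_eq. pose proof (one_plus_sq_pos x).
  apply (Rmult_le_reg_r (1 + x^2)); auto. rewrite Rmult_assoc, Rinv_l; lra.
Qed.

Lemma cos_abs_le y : Rabs (cos y) <= 1.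
Proof. pose proof (COS_bound y). unfold Rabs; destruct Rcase_abs; lra. Qed.
Lemma sin_abs_le y : Rabs (sin y) <= 1.
Proof. pose proof (SIN_bound y). unfold Rabs; destruct Rcase_abs; lra. Qed.

Lemma rel1 m w : (1 <= m)%nat -> w * A m w = 2 * INR m * B (S m) w.
Proof.
  intros Hm.
  pose proof (LimR_scal w _ _ (A_spec m w Hm)) as H1.
  assert (H2 : LimR (fun a b => (g m b * sin (w * b) - g m a * sin (w * a)) +
                                 2 * INR m * RInt (fun x => x * g (S m) x * sin (w * x)) a b)
                    (0 + 2 * INR m * B (S m) w)).
  { apply LimR_plus.
    - apply (LimR_boundary _ 1). intros x.
      rewrite Rabs_mult, Rabs_mult. pose proof (g_pos m x). pose proof (g_mono m x Hm).
      pose proof (absx_g1 x). pose proof (sin_abs_le (w*x)). pose proof (Rabs_pos (sin (w*x))).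
      pose proof (Rabs_pos x). rewrite (Rabs_right (g m x)) by lra.
      apply Rle_trans with (g m x * 1 * Rabs x). apply Rmult_le_compat_r; auto.
      apply Rmult_le_compat_l; lra. 
      apply Rle_trans with (Rabs x * g 1 x); auto. rewrite Rmult_1_r, Rmult_comm.
      apply Rmult_le_compat_l; lra.
    - apply LimR_scal. apply B_spec. lia. }
  rewrite Rplus_0_l in H2.
  eapply LimR_unique. apply H1.
  eapply LimR_ext; [|apply H2].
  intros a b. simpl.
  assert (E : RInt (fun x => w * (g m x * cos (w * x)) + (- 2 * INR m) * (x * g (S m) x * sin (w * x))) a b
              = g m b * sin (w * b) - g m a * sin (w * a)).
  { apply (FTC (fun x => g m x * sin (w * x))).
    - intros x. pose proof (g_derive m x) as Hg.
      auto_derive. eexists; eauto.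
      replace (Derive (fun x0 => g m x0) x) with (-2*INR m*x*g (S m) x)
        by (symmetry; apply is_derive_unique; exact Hg). ring.
    - intros x. cont_tac. }
  rewrite RInt_lin2 in E by (intros; cont_tac). lra.
Qed.

Lemma rel2_lim m w : (1 <= m)%nat ->
  LimR (fun a b => w * RInt (fun x => x * g m x * sin (w * x)) a b)
       (2 * INR m * A (S m) w - (2 * INR m - 1) * A m w).
Proof.
  intros Hm.
  assert (H : LimR (fun a b => 2 * INR m * RInt (fun x => g (S m) x * cos (w * x)) a b
                   + (- (2 * INR m - 1)) * RInt (fun x => g m x * cos (w * x)) a b
                   + (-1) * (b * g m b * cos (w * b) - a * g m a * cos (w * a)))
                (2 * INR m * A (S m) w + - (2 * INR m - 1) * A m w + -1 * 0)).
  { apply LimR_plus. apply LimR_plus; apply LimR_scal; apply A_spec; lia.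
    apply LimR_scal. apply (LimR_boundary _ 1). intros x.
    pose proof (g_pos m x). pose proof (g_mono m x Hm). pose proof (x2_g1 x).
    pose proof (cos_abs_le (w*x)). pose proof (Rabs_pos (cos (w*x))).
    replace (x * g m x * cos (w * x) * x) with ((x^2 * g m x) * cos (w * x)) by ring.
    rewrite Rabs_mult. rewrite (Rabs_right (x^2 * g m x)).
    2: { apply Rle_ge, Rmult_le_pos; [apply pow2_ge_0|lra]. }
    assert (x^2 * g m x <= 1).
    { apply Rle_trans with (x^2 * g 1 x); auto. apply Rmult_le_compat_l; auto. apply pow2_ge_0. }
    apply Rle_trans with (x^2 * g m x * 1). apply Rmult_le_compat_l; auto.
    apply Rmult_le_pos; [apply pow2_ge_0|lra]. lra. }
  eapply LimR_ext'; [| | apply H].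
  2: ring.
  intros a b. simpl.
  assert (E : RInt (fun x => 1 * (2 * INR m * (g (S m) x * cos (w * x)) +
                                 (- (2 * INR m - 1)) * (g m x * cos (w * x)))
                           + (- w) * (x * g m x * sin (w * x))) a b
              = b * g m b * cos (w * b) - a * g m a * cos (w * a)).
  { apply (FTC (fun x => x * g m x * cos (w * x))).
    - intros x. pose proof (g_derive m x) as Hg.
      auto_derive. eexists; eauto.
      replace (Derive (fun x0 => g m x0) x) with (-2*INR m*x*g (S m) x)
        by (symmetry; apply is_derive_unique; exact Hg).
      assert (Hr : g m x = x^2 * g (S m) x + g (S m) x) by (rewrite g_rel; ring).
      rewrite Hr. ring.
    - intros x. cont_tac. }
  rewrite RInt_lin2 in E by (intros; cont_tac).
  rewrite RInt_lin2 in E by (intros; cont_tac).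
  lra.
Qed.

Lemma rel2 m w : (2 <= m)%nat -> w * B m w = 2 * INR m * A (S m) w - (2 * INR m - 1) * A m w.
Proof.
  intros Hm. eapply LimR_unique. apply LimR_scal, B_spec; auto. apply rel2_lim. lia.
Qed.

Lemma rel2_0 m : (1 <= m)%nat -> 2 * INR m * A (S m) 0 - (2 * INR m - 1) * A m 0 = 0.
Proof.
  intros Hm. eapply LimR_unique. apply rel2_lim; auto.
  intros eps He. exists 0. intros a b _ _. rewrite Rmult_0_l, Rminus_0_r, Rabs_R0. auto.
Qed.

Lemma R2 n w : (1 <= n)%nat ->
  w ^ 2 * A n w = 2 * INR n * (2 * INR (S n) * A (S (S n)) w - (2 * INR (S n) - 1) * A (S n) w).
Proof.
  intros Hn. rewrite <- rel2 by lia.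
  replace (w^2 * A n w) with (w * (w * A n w)) by ring. rewrite rel1 by auto. ring.
Qed.


Lemma sin_lip a b : Rabs (sin a - sin b) <= Rabs (a - b).
Proof.
  destruct (MVT_abs sin cos b a) as [c [Hc _]].
  { intros c _. apply derivable_pt_lim_sin. }
  rewrite Hc. pose proof (cos_abs_le c). pose proof (Rabs_pos (a - b)).
  apply Rle_trans with (1 * Rabs (a - b)). apply Rmult_le_compat_r; auto. lra.
Qed.

Lemma cos_taylor y t : Rabs (cos (y + t) - cos y + t * sin y) <= t ^ 2.
Proof.
  set (phi := fun s => cos (y + s) - cos y + s * sin y).
  destruct (MVT_abs phi (fun s => - sin (y + s) + sin y) 0 t) as [c [Hc Hc2]].
  { intros c _. apply is_derive_Reals. unfold phi. auto_derive; auto. ring. }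
  unfold phi in Hc. rewrite Rplus_0_r, Rmult_0_l in Hc.
  replace (cos y - cos y + 0) with 0 in Hc by ring. rewrite Rminus_0_r in Hc.
  rewrite Hc. rewrite Rminus_0_r.
  replace (- sin (y + c) + sin y) with (- (sin (y + c) - sin y)) by ring. rewrite Rabs_Ropp.
  pose proof (sin_lip (y + c) y). replace (y + c - y) with c in H by ring.
  assert (Rabs c <= Rabs t).
  { unfold Rmin, Rmax in Hc2. destruct (Rle_dec 0 t).
    - rewrite (Rabs_right c), (Rabs_right t); lra.
    - rewrite (Rabs_left1 c), (Rabs_left1 t); lra. }
  pose proof (Rabs_pos t). pose proof (Rabs_pos (sin (y + c) - sin y)).
  apply Rle_trans with (Rabs t * Rabs t). apply Rmult_le_compat_r; lra.
  rewrite <- Rabs_mult. replace (t * t) with (t^2) by ring. rewrite Rabs_right. lra.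
  apply Rle_ge, pow2_ge_0.
Qed.

Lemma RInt_lin3 (f1 f2 f3 : R -> R) c1 c2 c3 a b : (forall x, continuous f1 x) ->
  (forall x, continuous f2 x) -> (forall x, continuous f3 x) ->
  RInt (fun x => c1 * f1 x + c2 * f2 x + c3 * f3 x) a b
  = c1 * RInt f1 a b + c2 * RInt f2 a b + c3 * RInt f3 a b.
Proof.
  intros H1 H2 H3.
  rewrite (RInt_ext (V:=R_CompleteNormedModule) _ (fun x => 1 * (c1 * f1 x + c2 * f2 x) + c3 * f3 x)) by (intros; simpl; ring).
  assert (Hc : forall x, continuous (fun x => c1 * f1 x + c2 * f2 x) x).
  { intros x. apply (continuous_plus (V:=R_NormedModule) (fun x => c1 * f1 x) (fun x => c2 * f2 x)).
    apply (continuous_scal_r c1 f1). auto. apply (continuous_scal_r c2 f2). auto. }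
  rewrite (RInt_lin2 (fun x => c1 * f1 x + c2 * f2 x) f3 1 c3 a b Hc H3).
  rewrite (RInt_lin2 f1 f2 c1 c2 a b H1 H2). match goal with |- @eq _ ?x ?y => change (@eq R x y) end. ring.
Qed.

Lemma A_taylor m w0 h : (2 <= m)%nat -> Rabs (A m (w0 + h) - A m w0 + h * B m w0) <= PI * h ^ 2.
Proof.
  intros Hm.
  assert (HL : LimR (fun a b => 1 * RInt (fun x => g m x * cos ((w0 + h) * x)) a b
                     + (-1) * RInt (fun x => g m x * cos (w0 * x)) a b
                     + h * RInt (fun x => x * g m x * sin (w0 * x)) a b)
                (1 * A m (w0 + h) + (-1) * A m w0 + h * B m w0)).
  { apply LimR_plus. apply LimR_plus; apply LimR_scal; apply A_spec; lia.
    apply LimR_scal; apply B_spec; auto. }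
  replace (A m (w0 + h) - A m w0 + h * B m w0) with (1 * A m (w0 + h) + (-1) * A m w0 + h * B m w0) by ring.
  eapply LimR_bound; [|apply HL].
  intros a b Ha Hb. simpl.
  rewrite <- RInt_lin3 by (intros; cont_tac).
  eapply Rle_trans. apply (RInt_dom _ (h^2)). lra. intros; cont_tac.
  - intros x.
    replace (1 * (g m x * cos ((w0 + h) * x)) + -1 * (g m x * cos (w0 * x)) + h * (x * g m x * sin (w0 * x)))
      with (g m x * (cos (w0 * x + h * x) - cos (w0 * x) + (h * x) * sin (w0 * x))).
    2: { replace ((w0 + h) * x) with (w0 * x + h * x) by ring. ring. }
    rewrite Rabs_mult. pose proof (g_pos m x). rewrite (Rabs_right (g m x)) by lra.
    pose proof (cos_taylor (w0 * x) (h * x)). pose proof (x2g_le m x Hm).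
    apply Rle_trans with (g m x * (h * x) ^ 2). apply Rmult_le_compat_l; lra.
    replace (g m x * (h * x) ^ 2) with (h^2 * (x^2 * g m x)) by ring.
    apply Rmult_le_compat_l; auto. apply pow2_ge_0.
  - pose proof (atan_bound a). pose proof (atan_bound b). pose proof (pow2_ge_0 h).
    rewrite (Rmult_comm PI). apply Rmult_le_compat_l; lra.
Qed.

Lemma A_derive m w0 : (2 <= m)%nat -> is_derive (A m) w0 (- B m w0).
Proof.
  intros Hm. apply is_derive_Reals. intros eps He.
  pose proof PI_RGT_0.
  assert (Hd : 0 < eps / (PI + 1)) by (apply Rdiv_lt_0_compat; lra).
  exists (mkposreal _ Hd). intros h Hh Hlt. simpl in Hlt.
  pose proof (A_taylor m w0 h Hm).
  replace ((A m (w0 + h) - A m w0) / h - - B m w0) with ((A m (w0 + h) - A m w0 + h * B m w0) / h)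
    by (field; auto).
  unfold Rdiv. rewrite Rabs_mult, Rabs_inv.
  assert (0 < Rabs h) by (apply Rabs_pos_lt; auto).
  apply (Rmult_lt_reg_r (Rabs h)); auto. rewrite Rmult_assoc, Rinv_l by lra. rewrite Rmult_1_r.
  replace (h^2) with (Rabs h * Rabs h) in H0.
  2: { rewrite <- Rabs_mult. rewrite Rabs_right. ring. apply Rle_ge. nra. }
  apply Rle_lt_trans with (PI * (Rabs h * Rabs h)); auto.
  assert (Rabs h * (PI + 1) < eps).
  { apply (Rmult_lt_compat_r (PI + 1)) in Hlt; [|lra]. unfold Rdiv in Hlt.
    rewrite Rmult_assoc, Rinv_l, Rmult_1_r in Hlt by lra. auto. }
  nra.
Qed.


Lemma A_bound m w : (1 <= m)%nat -> Rabs (A m w) <= PI.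
Proof.
  intros Hm. eapply LimR_bound; [|apply A_spec; auto].
  intros a b Ha Hb. simpl. eapply Rle_trans. apply (RInt_dom _ 1). lra. intros; cont_tac.
  - intros x. rewrite Rabs_mult. pose proof (g_pos m x). pose proof (g_mono m x Hm).
    rewrite (Rabs_right (g m x)) by lra. pose proof (cos_abs_le (w*x)).
    apply Rle_trans with (g m x * 1). apply Rmult_le_compat_l; lra. lra.
  - pose proof (atan_bound a). pose proof (atan_bound b). lra.
Qed.

Lemma A1_0 : A 1 0 = PI.
Proof.
  assert (HL : LimR (fun a b => atan b - atan a) PI).
  { intros eps He. exists (2 / eps + 1). intros a b Ha Hb.
    assert (HM : 0 < 2 / eps) by (apply Rdiv_lt_0_compat; lra).
    pose proof (tail b ltac:(lra)). pose proof (tail (- a) ltac:(lra)).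
    rewrite atan_opp in H0. pose proof (atan_bound a). pose proof (atan_bound b).
    assert (/ b < eps / 2).
    { apply (Rmult_lt_reg_r b). lra. rewrite Rinv_l by lra.
      apply (Rmult_lt_reg_r (2 / eps)). auto. 
      replace (eps / 2 * b * (2 / eps)) with b by (field; lra). lra. }
    assert (/ - a < eps / 2).
    { apply (Rmult_lt_reg_r (-a)). lra. rewrite Rinv_l by lra.
      apply (Rmult_lt_reg_r (2 / eps)). auto. 
      replace (eps / 2 * - a * (2 / eps)) with (-a) by (field; lra). lra. }
    rewrite Rabs_left1 by lra. lra. }
  eapply LimR_unique. apply (A_spec 1 0). lia.
  eapply LimR_ext; [|apply HL].
  intros a b. simpl. rewrite (RInt_ext (V:=R_CompleteNormedModule) _ (g 1)).
  2: { intros x _. rewrite Rmult_0_l, cos_0. match goal with |- @eq _ ?x ?y => change (@eq R x y) end. ring. }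
  rewrite RInt_g1. reflexivity.
Qed.

Lemma A0_rec m : (1 <= m)%nat -> A (S m) 0 = (2 * INR m - 1) / (2 * INR m) * A m 0.
Proof.
  intros Hm. pose proof (rel2_0 m Hm).
  assert (1 <= INR m) by (apply (le_INR 1); lia).
  field_simplify_eq; [|lra]. lra.
Qed.

Lemma fact_INR_S k : INR (Factorial.fact (S k)) = INR (S k) * INR (Factorial.fact k).
Proof. change (Factorial.fact (S k)) with (S k * Factorial.fact k)%nat. rewrite mult_INR. reflexivity. Qed.

Lemma fact_pos' k : 0 < INR (Factorial.fact k).
Proof. apply lt_0_INR, Factorial.lt_O_fact. Qed.

Lemma Ccentral k : Binomial.C (2 * k) k = INR (Factorial.fact (2 * k)) / (INR (Factorial.fact k) * INR (Factorial.fact k)).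
Proof. unfold Binomial.C. replace (2 * k - k)%nat with k by lia. reflexivity. Qed.

Lemma Ccentral_S k : Binomial.C (2 * S k) (S k) = Binomial.C (2 * k) k * (2 * (2 * INR k + 1) / (INR k + 1)).
Proof.
  rewrite !Ccentral. replace (2 * S k)%nat with (S (S (2 * k))) by lia.
  rewrite !fact_INR_S. rewrite !S_INR. rewrite mult_INR.
  pose proof (fact_pos' k). pose proof (pos_INR k). simpl (INR 2).
  field. lra.
Qed.

Lemma A0_closed k : A (S k) 0 = PI * Binomial.C (2 * k) k / 4 ^ k.
Proof.
  induction k.
  - simpl. rewrite A1_0. unfold Binomial.C. simpl. field.
  - rewrite A0_rec by lia. rewrite IHk. rewrite Ccentral_S. rewrite S_INR.
    pose proof (pos_INR k). simpl pow.
    assert (0 < 4 ^ k) by (apply pow_lt; lra).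
    field. lra.
Qed.

Lemma C_2n1 k : Binomial.C (2 * S k - 1) (S k) = Binomial.C (2 * S k) (S k) / 2.
Proof.
  rewrite Ccentral. unfold Binomial.C.
  replace (2 * S k - 1)%nat with (S (2 * k)) by lia.
  replace (S (2 * k) - S k)%nat with k by lia.
  replace (2 * S k)%nat with (S (S (2 * k))) by lia.
  rewrite !fact_INR_S. rewrite !S_INR. rewrite mult_INR.
  pose proof (fact_pos' k). pose proof (fact_pos' (2*k)). pose proof (pos_INR k). simpl (INR 2).
  field. lra.
Qed.

Lemma C_2n1' k : Binomial.C (2 * k + 1) k = Binomial.C (2 * k) k * ((2 * INR k + 1) / (INR k + 1)).
Proof.
  rewrite Ccentral. unfold Binomial.C.
  replace (2 * k + 1 - k)%nat with (S k) by lia.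
  replace (2 * k + 1)%nat with (S (2 * k)) by lia.
  rewrite !fact_INR_S. rewrite !S_INR. rewrite mult_INR.
  pose proof (fact_pos' k). pose proof (fact_pos' (2*k)). pose proof (pos_INR k). simpl (INR 2).
  field. lra.
Qed.


Lemma INR_pos_1 n : (1 <= n)%nat -> 1 <= INR n.
Proof. intros. apply (le_INR 1); lia. Qed.

Lemma R2' n w : (1 <= n)%nat ->
  w ^ 2 * A n w = 2 * INR n * (2 * (INR n + 1) * A (S (S n)) w - (2 * (INR n + 1) - 1) * A (S n) w).
Proof. intros. rewrite R2 by auto. rewrite S_INR. ring. Qed.

Lemma An_derive n w : (1 <= n)%nat -> w <> 0 ->
  is_derive (A n) w (((2 * INR n - 1) * A n w - 2 * INR n * A (S n) w) / w).
Proof.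
  intros Hn Hw.
  set (G := fun t => 2 * INR n * (2 * (INR n + 1) * A (S (S n)) t - (2 * (INR n + 1) - 1) * A (S n) t) / t ^ 2).
  assert (Hloc : locally w (fun t => G t = A n t)).
  { assert (Hp : 0 < Rabs w) by (apply Rabs_pos_lt; auto).
    exists (mkposreal _ Hp). intros t Ht.
    assert (Ht' : Rabs (t - w) < Rabs w) by exact Ht.
    assert (t <> 0).
    { intros ->. rewrite Rminus_0_l, Rabs_Ropp in Ht'. lra. }
    unfold G. rewrite <- R2' by auto. field. auto. }
  apply (is_derive_ext_loc G). exact Hloc.
  pose proof (A_derive (S n) w ltac:(lia)) as D1.
  pose proof (A_derive (S (S n)) w ltac:(lia)) as D2.
  assert (E : is_derive G w
     (2 * INR n * (2 * (INR n + 1) * (- B (S (S n)) w) - (2 * (INR n + 1) - 1) * (- B (S n) w)) / w ^ 2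
      - 2 * G w / w)).
  { unfold G. auto_derive; [repeat split; auto; eexists; eauto|].
    replace (Derive (fun x => A (S (S n)) x) w) with (- B (S (S n)) w) by (symmetry; apply is_derive_unique; auto).
    replace (Derive (fun x => A (S n) x) w) with (- B (S n) w) by (symmetry; apply is_derive_unique; auto).
      field. auto. }
  replace (((2 * INR n - 1) * A n w - 2 * INR n * A (S n) w) / w) with
     (2 * INR n * (2 * (INR n + 1) * (- B (S (S n)) w) - (2 * (INR n + 1) - 1) * (- B (S n) w)) / w ^ 2
      - 2 * G w / w); auto.
  assert (HG : G w = A n w).
  { unfold G. rewrite <- R2' by auto. field. auto. }
  rewrite HG.
  pose proof (rel1 n w Hn) as E1. pose proof (rel1 (S n) w ltac:(lia)) as E2.
  pose proof (R2' n w Hn) as E3.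
  pose proof (INR_pos_1 n Hn). rewrite S_INR in *.
  assert (HB1 : B (S n) w = w * A n w / (2 * INR n)) by (rewrite E1; field; lra).
  assert (HB2 : B (S (S n)) w = w * A (S n) w / (2 * (INR n + 1))) by (rewrite E2; field; lra).
  rewrite HB1, HB2.
  assert (HA : A (S (S n)) w = (w^2 * A n w / (2 * INR n) + (2 * (INR n + 1) - 1) * A (S n) w) / (2 * (INR n + 1))).
  { rewrite E3. field. lra. }
  field. split; auto. lra.
Qed.

Definition Phi (n : nat) (w : R) : R :=
  - w ^ 4 * (A n w) ^ 2 / (4 * (INR n + 1)) + INR n * w ^ 2 * A n w * A (S n) w / (INR n + 1)
  + (INR n ^ 2 * (2 * INR n + 1) + INR n ^ 2 * w ^ 2) / (INR n + 1) * (A (S n) w) ^ 2.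

Lemma Phi_derive n w : (1 <= n)%nat -> w <> 0 -> is_derive (Phi n) w (- (w ^ 3 * (A n w) ^ 2)).
Proof.
  intros Hn Hw.
  pose proof (An_derive n w Hn Hw) as D0.
  pose proof (A_derive (S n) w ltac:(lia)) as D1.
  pose proof (INR_pos_1 n Hn).
  unfold Phi. auto_derive.
  - repeat split; try (eexists; eauto); lra.
  - replace (Derive (fun x => A n x) w) with (((2 * INR n - 1) * A n w - 2 * INR n * A (S n) w) / w)
      by (symmetry; apply is_derive_unique; auto).
    replace (Derive (fun x => A (S n) x) w) with (- B (S n) w) by (symmetry; apply is_derive_unique; auto).
    pose proof (rel1 n w Hn) as E1.
    assert (HB1 : B (S n) w = w * A n w / (2 * INR n)) by (rewrite E1; field; lra).
    rewrite HB1. field. repeat split; auto; lra.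
Qed.


Lemma cube_small x : Rabs x <= 1 -> Rabs (x ^ 3) <= Rabs x.
Proof.
  intros H. rewrite <- RPow_abs. pose proof (Rabs_pos x).
  simpl. rewrite Rmult_1_r.
  assert (Rabs x * Rabs x <= 1) by nra. nra.
Qed.

Lemma f_cont n w : (1 <= n)%nat -> continuous (fun w => w ^ 3 * (A n w) ^ 2) w.
Proof.
  intros Hn. destruct (Req_dec w 0) as [->|Hw].
  - apply continuity_pt_filterlim.
    unfold continuity_pt, continue_in, limit1_in, limit_in. intros eps He.
    pose proof PI_RGT_0.
    assert (Hd : 0 < Rmin 1 (eps / (PI ^ 2 + 1))).
    { apply Rmin_pos. lra. apply Rdiv_lt_0_compat; auto. nra. }
    exists (Rmin 1 (eps / (PI ^ 2 + 1))). split; auto.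
    intros x [_ Hx0].
    assert (Hx : Rabs (x - 0) < Rmin 1 (eps/(PI^2+1))) by exact Hx0. rewrite Rminus_0_r in Hx.
    change (Rabs (x ^ 3 * A n x ^ 2 - 0 ^ 3 * A n 0 ^ 2) < eps).
    replace (x ^ 3 * A n x ^ 2 - 0 ^ 3 * A n 0 ^ 2) with (x ^ 3 * A n x ^ 2) by ring.
    pose proof (Rmin_l 1 (eps / (PI ^ 2 + 1))). pose proof (Rmin_r 1 (eps / (PI ^ 2 + 1))).
    pose proof (cube_small x ltac:(lra)).
    rewrite Rabs_mult. pose proof (A_bound n 0 Hn).
    rewrite <- RPow_abs with (x := A n x).
    pose proof (A_bound n x Hn). pose proof (Rabs_pos (A n x)). pose proof (Rabs_pos (x^3)).
    assert (Rabs (A n x) ^ 2 <= PI ^ 2) by (simpl; nra).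
    apply Rle_lt_trans with (Rabs x * PI ^ 2).
    { apply Rle_trans with (Rabs (x^3) * PI ^ 2). apply Rmult_le_compat_l; auto.
      apply Rmult_le_compat_r; auto. nra. }
    assert (Rabs x * (PI^2 + 1) < eps).
    { apply (Rmult_lt_compat_r (PI ^ 2 + 1)) in Hx; [|nra].
      apply Rlt_le_trans with (Rmin 1 (eps / (PI ^ 2 + 1)) * (PI ^ 2 + 1)). auto.
      apply Rle_trans with (eps / (PI ^ 2 + 1) * (PI ^ 2 + 1)). apply Rmult_le_compat_r; nra.
      right. field. nra. }
    pose proof (Rabs_pos x). nra.
  - apply (ex_derive_continuous (K:=R_AbsRing) (V:=R_NormedModule)).
    auto_derive. eexists. apply An_derive; auto.
Qed.

Lemma cont_pt_of_derive (h : R -> R) x l : is_derive h x l ->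
  forall eps, 0 < eps -> exists d, 0 < d /\ forall y, Rabs (y - x) < d -> Rabs (h y - h x) < eps.
Proof.
  intros Hd. apply is_derive_Reals in Hd.
  assert (Hc : continuity_pt h x) by (apply (derivable_continuous_pt h x (exist _ l Hd))).
  intros eps He. destruct (Hc eps He) as [d [Hd0 Hd1]]. exists d. split; auto.
  intros y Hy. destruct (Req_dec y x) as [->|Hne].
  - rewrite Rminus_diag, Rabs_R0. auto.
  - apply (Hd1 y). unfold D_x, no_cond. split; [split; auto|exact Hy].
Qed.

Lemma small_bound (k e a c P : R) : 1 <= k -> 0 < e <= 1 -> Rabs a <= P -> Rabs c <= P ->
  Rabs (e^4*a^2/(4*(k+1)) - k*e^2*a*c/(k+1) - k^2*e^2/(k+1)*c^2) <= e*(P^2*(1+k+k^2)).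
Proof.
  intros Hk He Ha Hc.
  set (q := / (k + 1)).
  assert (Hq : 0 < q <= 1).
  { unfold q. split. apply Rinv_0_lt_compat; lra. rewrite <- Rinv_1. apply Rinv_le_contravar; lra. }
  replace (e^4*a^2/(4*(k+1)) - k*e^2*a*c/(k+1) - k^2*e^2/(k+1)*c^2)
    with (q * (e^4*a^2/4 - k*e^2*(a*c) - k^2*e^2*c^2)) by (unfold q; field; lra).
  rewrite Rabs_mult, (Rabs_right q) by lra.
  set (X := e^4*a^2/4 - k*e^2*(a*c) - k^2*e^2*c^2).
  assert (HX : Rabs X <= e*(P^2*(1+k+k^2))).
  { unfold X.
    assert (Pa : a^2 <= P^2).
    { rewrite <- (Rabs_right (a^2)) by (apply Rle_ge, pow2_ge_0). rewrite <- RPow_abs.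
      apply pow_incr. split; [apply Rabs_pos|auto]. }
    assert (Pc : c^2 <= P^2).
    { rewrite <- (Rabs_right (c^2)) by (apply Rle_ge, pow2_ge_0). rewrite <- RPow_abs.
      apply pow_incr. split; [apply Rabs_pos|auto]. }
    assert (Pac : Rabs (a*c) <= P^2).
    { rewrite Rabs_mult. simpl. rewrite Rmult_1_r. apply Rmult_le_compat; auto; apply Rabs_pos. }
    assert (E4 : e^4 <= e).
    { apply Rle_trans with (e * 1); [|lra]. replace (e^4) with (e * e^3) by ring.
      apply Rmult_le_compat_l; [lra|]. apply Rle_trans with (1^3); [apply pow_incr; lra| right; ring]. }
    assert (E2 : e^2 <= e).
    { apply Rle_trans with (e * 1); [|lra]. replace (e^2) with (e * e^1) by ring.
      apply Rmult_le_compat_l; [lra|]. apply Rle_trans with (1^1); [apply pow_incr; lra| right; ring]. }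
    pose proof (pow2_ge_0 a). pose proof (pow2_ge_0 c). pose proof (pow2_ge_0 e).
    assert (0 <= e^4) by (apply pow_le; lra).
    eapply Rle_trans. apply Rabs_triang. rewrite Rabs_Ropp.
    eapply Rle_trans. apply Rplus_le_compat_r. apply Rabs_triang. rewrite Rabs_Ropp.
    rewrite !Rabs_mult. rewrite Rabs_right by (apply Rle_ge; apply Rmult_le_pos; [apply Rmult_le_pos|]; lra).
    rewrite (Rabs_right k), (Rabs_right (e^2)), (Rabs_right (k^2)), (Rabs_right (c^2)) by (apply Rle_ge; try apply pow2_ge_0; lra).
    assert (e^4*a^2/4 <= e * P^2).
    { assert (0 <= e^4*a^2) by (apply Rmult_le_pos; lra).
      apply Rle_trans with (e^4 * a^2). lra. apply Rmult_le_compat; lra. }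
    rewrite Rabs_mult in Pac.
    assert (k * e^2 * (Rabs a * Rabs c) <= k * (e * P^2)).
    { rewrite Rmult_assoc. apply Rmult_le_compat_l. lra. apply Rmult_le_compat; auto; try lra.
      apply Rmult_le_pos; apply Rabs_pos. }
    assert (k^2 * e^2 * c^2 <= k^2 * (e * P^2)).
    { rewrite Rmult_assoc. apply Rmult_le_compat_l. apply pow2_ge_0. apply Rmult_le_compat; auto; try lra. }
    replace (e*(P^2*(1+k+k^2))) with (e*P^2 + k*(e*P^2) + k^2*(e*P^2)) by ring. lra. }
  pose proof (Rabs_pos X). nra.
Qed.

Lemma RInt_f n b : (1 <= n)%nat -> 0 < b -> RInt (fun w => w ^ 3 * (A n w) ^ 2) 0 b = Phi n 0 - Phi n b.
Proof.
  intros Hn Hb. set (f := fun w => w ^ 3 * (A n w) ^ 2).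
  assert (Hfc : forall x, continuous f x) by (intros; apply f_cont; auto).
  assert (Hmid : forall e, 0 < e <= b -> RInt f e b = Phi n e - Phi n b).
  { intros e He.
    assert (E : RInt (fun w => - f w) e b = Phi n b - Phi n e).
    { apply (is_RInt_unique (V:=R_CompleteNormedModule)).
      apply (is_RInt_derive (V:=R_CompleteNormedModule) (Phi n) (fun w => - f w)).
      - intros x Hx. rewrite Rmin_left, Rmax_right in Hx by lra. apply Phi_derive; auto. lra.
      - intros x _. apply (continuous_opp (V:=R_NormedModule) f). auto. }
    rewrite (RInt_opp (V:=R_CompleteNormedModule)) in E by (apply exRI; auto).
    change (opp (RInt f e b)) with (- RInt f e b) in E. lra. }
  set (D := RInt f 0 b - (Phi n 0 - Phi n b)).
  assert (HD : forall e, 0 < e <= b -> D = RInt f 0 e - (Phi n 0 - Phi n e)).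
  { intros e He. unfold D. rewrite <- (RInt_Chasles (V:=R_CompleteNormedModule) f 0 e b)
      by (apply exRI; auto).
    change (plus (RInt f 0 e) (RInt f e b)) with (RInt f 0 e + RInt f e b).
    rewrite Hmid; auto. ring. }
  apply Rminus_diag_uniq. fold D. apply Rabs_eq_0. apply Rle_antisym; [|apply Rabs_pos].
  apply Rnot_lt_le. intros Hpos. set (eps := Rabs D) in Hpos.
  pose proof PI_RGT_0 as HPI. pose proof (INR_pos_1 n Hn) as Hn1.
  set (K0 := INR n ^ 2 * (2 * INR n + 1) / (INR n + 1)).
  assert (HK0 : 0 < K0) by (unfold K0; apply Rdiv_lt_0_compat; [apply Rmult_lt_0_compat; nra|lra]).
  destruct (cont_pt_of_derive (A (S n)) 0 _ (A_derive (S n) 0 ltac:(lia)) (eps / (2 * (2 * K0 * PI + 1))))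
    as [d [Hd Hd1]].
  { apply Rdiv_lt_0_compat; [lra|nra]. }
  set (L := PI ^ 2 * (2 + INR n + INR n ^ 2)).
  assert (HL : 0 < L) by (unfold L; nra).
  set (e := Rmin (Rmin 1 b) (Rmin (d / 2) (eps / (2 * (L + 1))))).
  assert (He0 : 0 < e).
  { unfold e. apply Rmin_pos; apply Rmin_pos; try lra. apply Rdiv_lt_0_compat; lra. }
  assert (He1 : e <= 1) by (unfold e; apply Rle_trans with (Rmin 1 b); [apply Rmin_l|apply Rmin_l]).
  assert (Heb : e <= b) by (unfold e; apply Rle_trans with (Rmin 1 b); [apply Rmin_l|apply Rmin_r]).
  assert (Hed : e < d).
  { unfold e. apply Rle_lt_trans with (Rmin (d / 2) (eps / (2 * (L + 1)))). apply Rmin_r.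
    apply Rle_lt_trans with (d / 2). apply Rmin_l. lra. }
  assert (HeL : e * (L + 1) <= eps / 2).
  { assert (e <= eps / (2 * (L + 1))).
    { unfold e. apply Rle_trans with (Rmin (d / 2) (eps / (2 * (L + 1)))). apply Rmin_r. apply Rmin_r. }
    apply (Rmult_le_compat_r (L + 1)) in H; [|lra].
    replace (eps / (2 * (L + 1)) * (L + 1)) with (eps / 2) in H by (field; lra). auto. }
  specialize (HD e (conj He0 Heb)).
  assert (H1 : Rabs (RInt f 0 e) <= e * (e ^ 3 * PI ^ 2)).
  { replace (e * (e ^ 3 * PI ^ 2)) with ((e - 0) * (e ^ 3 * PI ^ 2)) by ring.
    apply abs_RInt_le_const. lra. apply exRI; auto.
    intros t Ht. unfold f. rewrite Rabs_mult. rewrite <- !RPow_abs.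
    pose proof (A_bound n t Hn). pose proof (Rabs_pos (A n t)).
    rewrite (Rabs_right t) by lra.
    apply Rmult_le_compat. apply pow_le; lra. apply pow_le, Rabs_pos.
    apply pow_incr; lra. apply pow_incr; lra. }
  set (a := A n e). set (c := A (S n) e). set (c0 := A (S n) 0).
  assert (Ha : Rabs a <= PI) by (apply A_bound; auto).
  assert (Hc : Rabs c <= PI) by (apply A_bound; lia).
  assert (Hc0 : Rabs c0 <= PI) by (apply A_bound; lia).
  assert (Hcc : Rabs (c - c0) < eps / (2 * (2 * K0 * PI + 1))).
  { apply Hd1. rewrite Rminus_0_r, Rabs_right; lra. }
  assert (EP : Phi n 0 - Phi n e = - (K0 * (c - c0) * (c + c0)) +
     (e ^ 4 * a ^ 2 / (4 * (INR n + 1)) - INR n * e ^ 2 * a * c / (INR n + 1) - INR n ^ 2 * e ^ 2 / (INR n + 1) * c ^ 2)).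
  { unfold Phi, K0, a, c, c0. field. lra. }
  assert (H2 : Rabs (Phi n 0 - Phi n e) <= K0 * (2 * PI) * Rabs (c - c0) + e * (PI ^ 2 * (1 + INR n + INR n ^ 2))).
  { rewrite EP. eapply Rle_trans. apply Rabs_triang. rewrite Rabs_Ropp.
    apply Rplus_le_compat.
    - rewrite !Rabs_mult. rewrite (Rabs_right K0) by lra.
      pose proof (Rabs_triang c c0). pose proof (Rabs_pos (c - c0)).
      apply Rle_trans with (K0 * Rabs (c - c0) * (2 * PI)); [|right; ring].
      apply Rmult_le_compat_l. apply Rmult_le_pos; lra. lra.
    - apply small_bound; auto. }
  pose proof (Rabs_triang (RInt f 0 e) (- (Phi n 0 - Phi n e))) as HT. rewrite Rabs_Ropp in HT.
  assert (E4 : e ^ 3 <= 1).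
  { apply Rle_trans with (1 ^ 3). apply pow_incr; lra. right; ring. }
  assert (H1' : Rabs (RInt f 0 e) <= e * PI ^ 2).
  { apply Rle_trans with (e * (e^3 * PI^2)); auto. apply Rmult_le_compat_l. lra.
    apply Rle_trans with (1 * PI^2). apply Rmult_le_compat_r. apply pow2_ge_0. auto. lra. }
  assert (Hcc' : 2 * K0 * PI * Rabs (c - c0) < eps / 2).
  { apply Rle_lt_trans with ((2 * K0 * PI + 1) * Rabs (c - c0)).
    apply Rmult_le_compat_r. apply Rabs_pos. lra.
    apply (Rmult_lt_compat_l (2 * K0 * PI + 1)) in Hcc; [|nra].
    replace ((2 * K0 * PI + 1) * (eps / (2 * (2 * K0 * PI + 1)))) with (eps / 2) in Hcc by (field; nra).
    auto. }
  assert (HLe : e * PI ^ 2 + e * (PI ^ 2 * (1 + INR n + INR n ^ 2)) = e * L) by (unfold L; ring).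
  replace (K0 * (2 * PI) * Rabs (c - c0)) with (2 * K0 * PI * Rabs (c - c0)) in H2 by ring.
  assert (HF : Rabs D < eps).
  { rewrite HD. unfold Rminus at 1. eapply Rle_lt_trans. apply HT.
    assert (e * L <= e * (L + 1)) by (apply Rmult_le_compat_l; lra).
    lra. }
  unfold eps in HF. lra.
Qed.


Lemma abs_sub_le x y : Rabs (x - y) <= Rabs x + Rabs y.
Proof. unfold Rminus. eapply Rle_trans; [apply Rabs_triang|]. rewrite Rabs_Ropp. lra. Qed.

Definition Cm (m : nat) : R := 2 * INR m * (4 * INR m + 3) * PI.

Lemma Cm_nonneg m : 0 <= Cm m.
Proof. unfold Cm. pose proof (pos_INR m). pose proof PI_RGT_0. apply Rmult_le_pos; [|lra]. nra. Qed.

Lemma R2_bound m w : (1 <= m)%nat -> Rabs (w ^ 2 * A m w) <= Cm m.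
Proof.
  intros Hm. rewrite R2' by auto. unfold Cm.
  pose proof (INR_pos_1 m Hm). pose proof (A_bound (S (S m)) w ltac:(lia)).
  pose proof (A_bound (S m) w ltac:(lia)).
  rewrite Rabs_mult, (Rabs_right (2 * INR m)) by lra.
  replace (2 * INR m * (4 * INR m + 3) * PI) with (2 * INR m * ((4 * INR m + 3) * PI)) by ring.
  apply Rmult_le_compat_l. lra.
  eapply Rle_trans. apply abs_sub_le. rewrite (Rabs_mult (2 * (INR m + 1))), (Rabs_mult (2 * (INR m + 1) - 1)).
  rewrite (Rabs_right (2 * (INR m + 1))), (Rabs_right (2 * (INR m + 1) - 1)) by lra.
  assert (2 * (INR m + 1) * Rabs (A (S (S m)) w) <= 2 * (INR m + 1) * PI) by (apply Rmult_le_compat_l; lra).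
  assert ((2 * (INR m + 1) - 1) * Rabs (A (S m) w) <= (2 * (INR m + 1) - 1) * PI) by (apply Rmult_le_compat_l; lra).
  lra.
Qed.

Lemma A_decay m w : (1 <= m)%nat -> w <> 0 -> Rabs (A m w) <= Cm m / w ^ 2.
Proof.
  intros Hm Hw. pose proof (R2_bound m w Hm).
  assert (0 < w ^ 2) by (apply pow2_gt_0; auto).
  rewrite Rabs_mult, (Rabs_right (w^2)) in H by lra.
  apply (Rmult_le_reg_l (w^2)); auto. replace (w^2 * (Cm m / w^2)) with (Cm m) by (field; lra). lra.
Qed.

Definition Dn (n : nat) : R := 2 * INR n * (2 * (INR n + 1) * Cm (S (S n)) + (2 * (INR n + 1) - 1) * Cm (S n)).

Lemma w2A_decay n w : (1 <= n)%nat -> w <> 0 -> Rabs (w ^ 2 * A n w) <= Dn n / w ^ 2.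
Proof.
  intros Hn Hw. rewrite R2' by auto. unfold Dn.
  pose proof (INR_pos_1 n Hn). pose proof (A_decay (S (S n)) w ltac:(lia) Hw).
  pose proof (A_decay (S n) w ltac:(lia) Hw).
  assert (0 < w ^ 2) by (apply pow2_gt_0; auto).
  rewrite Rabs_mult, (Rabs_right (2 * INR n)) by lra.
  replace (2 * INR n * (2 * (INR n + 1) * Cm (S (S n)) + (2 * (INR n + 1) - 1) * Cm (S n)) / w ^ 2)
    with (2 * INR n * (2 * (INR n + 1) * (Cm (S (S n)) / w ^ 2) + (2 * (INR n + 1) - 1) * (Cm (S n) / w ^ 2)))
    by (field; lra).
  apply Rmult_le_compat_l. lra.
  eapply Rle_trans. apply abs_sub_le. rewrite (Rabs_mult (2 * (INR n + 1))), (Rabs_mult (2 * (INR n + 1) - 1)).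
  rewrite (Rabs_right (2 * (INR n + 1))), (Rabs_right (2 * (INR n + 1) - 1)) by lra.
  assert (2 * (INR n + 1) * Rabs (A (S (S n)) w) <= 2 * (INR n + 1) * (Cm (S (S n)) / w ^ 2)) by (apply Rmult_le_compat_l; lra).
  assert ((2 * (INR n + 1) - 1) * Rabs (A (S n) w) <= (2 * (INR n + 1) - 1) * (Cm (S n) / w ^ 2)) by (apply Rmult_le_compat_l; lra).
  lra.
Qed.

Lemma phi_bound (k X c Y t D C : R) : 1 <= k -> 0 < t <= 1 -> 0 <= D -> 0 <= C ->
  Rabs X <= D * t ^ 2 -> Rabs c <= C * t ^ 2 -> Rabs Y <= C * t ->
  Rabs (- X ^ 2 / (4 * (k + 1)) + k * X * c / (k + 1) + (k ^ 2 * (2 * k + 1) * c ^ 2 + k ^ 2 * Y ^ 2) / (k + 1))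
  <= t ^ 2 * (D ^ 2 + k * D * C + k ^ 2 * (2 * k + 1) * C ^ 2 + k ^ 2 * C ^ 2).
Proof.
  intros Hk Ht HD HC HX Hc HY.
  set (q := / (k + 1)).
  assert (Hq : 0 < q <= 1).
  { unfold q. split. apply Rinv_0_lt_compat; lra. rewrite <- Rinv_1. apply Rinv_le_contravar; lra. }
  replace (- X ^ 2 / (4 * (k + 1)) + k * X * c / (k + 1) + (k ^ 2 * (2 * k + 1) * c ^ 2 + k ^ 2 * Y ^ 2) / (k + 1))
    with (q * (- (X ^ 2 / 4) + k * (X * c) + k ^ 2 * (2 * k + 1) * c ^ 2 + k ^ 2 * Y ^ 2)) by (unfold q; field; lra).
  rewrite Rabs_mult, (Rabs_right q) by lra.
  assert (Ht2 : t ^ 4 <= t ^ 2).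
  { replace (t^4) with (t^2 * t^2) by ring. pose proof (pow2_ge_0 t).
    assert (t^2 <= 1) by (apply Rle_trans with (1^2); [apply pow_incr; lra|right; ring]).
    apply Rle_trans with (t^2 * 1). apply Rmult_le_compat_l; lra. lra. }
  assert (B1 : X ^ 2 <= D ^ 2 * t ^ 2).
  { rewrite <- (Rabs_right (X^2)) by (apply Rle_ge, pow2_ge_0). rewrite <- RPow_abs.
    apply Rle_trans with ((D * t^2)^2). apply pow_incr. split; [apply Rabs_pos|auto].
    replace ((D * t ^ 2) ^ 2) with (D^2 * t^4) by ring. apply Rmult_le_compat_l. apply pow2_ge_0. auto. }
  assert (B2 : Rabs (X * c) <= D * C * t ^ 2).
  { rewrite Rabs_mult. apply Rle_trans with ((D * t^2) * (C * t^2)).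
    apply Rmult_le_compat; auto; apply Rabs_pos.
    replace (D * t ^ 2 * (C * t ^ 2)) with (D * C * t^4) by ring. apply Rmult_le_compat_l. nra. auto. }
  assert (B3 : c ^ 2 <= C ^ 2 * t ^ 2).
  { rewrite <- (Rabs_right (c^2)) by (apply Rle_ge, pow2_ge_0). rewrite <- RPow_abs.
    apply Rle_trans with ((C * t^2)^2). apply pow_incr. split; [apply Rabs_pos|auto].
    replace ((C * t ^ 2) ^ 2) with (C^2 * t^4) by ring. apply Rmult_le_compat_l. apply pow2_ge_0. auto. }
  assert (B4 : Y ^ 2 <= C ^ 2 * t ^ 2).
  { rewrite <- (Rabs_right (Y^2)) by (apply Rle_ge, pow2_ge_0). rewrite <- RPow_abs.
    replace (C ^ 2 * t ^ 2) with ((C * t)^2) by ring. apply pow_incr. split; [apply Rabs_pos|auto]. }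
  set (Z := - (X ^ 2 / 4) + k * (X * c) + k ^ 2 * (2 * k + 1) * c ^ 2 + k ^ 2 * Y ^ 2).
  assert (HZ : Rabs Z <= t ^ 2 * (D ^ 2 + k * D * C + k ^ 2 * (2 * k + 1) * C ^ 2 + k ^ 2 * C ^ 2)).
  { unfold Z. pose proof (pow2_ge_0 X). pose proof (pow2_ge_0 c). pose proof (pow2_ge_0 Y).
    assert (Hk2 : 0 <= k ^ 2) by apply pow2_ge_0.
    assert (Hk3 : 0 <= k ^ 2 * (2 * k + 1)) by (apply Rmult_le_pos; lra).
    eapply Rle_trans. apply Rabs_triang. eapply Rle_trans. apply Rplus_le_compat_r. apply Rabs_triang.
    eapply Rle_trans. apply Rplus_le_compat_r. apply Rplus_le_compat_r. apply Rabs_triang.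
    rewrite Rabs_Ropp. rewrite !Rabs_mult.
    rewrite (Rabs_right (X ^ 2 / 4)) by (apply Rle_ge; lra).
    rewrite (Rabs_right k), (Rabs_right (k ^ 2)), (Rabs_right (c ^ 2)), (Rabs_right (Y^2)),
      (Rabs_right (2 * k + 1)) by (apply Rle_ge; try apply pow2_ge_0; lra).
    rewrite Rabs_mult in B2.
    assert (k * (Rabs X * Rabs c) <= k * (D * C * t ^ 2)) by (apply Rmult_le_compat_l; lra).
    assert (k ^ 2 * (2 * k + 1) * c ^ 2 <= k ^ 2 * (2 * k + 1) * (C ^ 2 * t ^ 2)) by (apply Rmult_le_compat_l; lra).
    assert (k ^ 2 * Y ^ 2 <= k ^ 2 * (C ^ 2 * t ^ 2)) by (apply Rmult_le_compat_l; lra).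
    replace (t ^ 2 * (D ^ 2 + k * D * C + k ^ 2 * (2 * k + 1) * C ^ 2 + k ^ 2 * C ^ 2)) with
      (D ^ 2 * t ^ 2 + k * (D * C * t ^ 2) + k ^ 2 * (2 * k + 1) * (C ^ 2 * t ^ 2) + k ^ 2 * (C ^ 2 * t ^ 2)) by ring.
    lra. }
  pose proof (Rabs_pos Z).
  apply Rle_trans with (1 * Rabs Z). apply Rmult_le_compat_r; lra. lra.
Qed.

Definition En (n : nat) : R :=
  let k := INR n in let D := Dn n in let C := Cm (S n) in
  D ^ 2 + k * D * C + k ^ 2 * (2 * k + 1) * C ^ 2 + k ^ 2 * C ^ 2.

Lemma Dn_nonneg n : (1 <= n)%nat -> 0 <= Dn n.
Proof.
  intros Hn. unfold Dn. pose proof (INR_pos_1 n Hn). pose proof (Cm_nonneg (S (S n))). pose proof (Cm_nonneg (S n)).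
  apply Rmult_le_pos. lra. apply Rplus_le_le_0_compat; apply Rmult_le_pos; lra.
Qed.

Lemma En_nonneg n : (1 <= n)%nat -> 0 <= En n.
Proof.
  intros Hn. pose proof (INR_pos_1 n Hn). pose proof (Dn_nonneg n Hn). pose proof (Cm_nonneg (S n)).
  change (0 <= (Dn n)^2 + INR n * Dn n * Cm (S n) + INR n^2*(2*INR n+1)*Cm (S n)^2 + INR n^2 * Cm (S n)^2).
  repeat (first [lra | apply pow2_ge_0 | apply Rplus_le_le_0_compat | apply Rmult_le_pos]).
Qed.

Lemma Phi_decay n b : (1 <= n)%nat -> 1 <= b -> Rabs (Phi n b) <= En n / b.
Proof.
  intros Hn Hb.
  set (t := / b).
  assert (Ht : 0 < t <= 1).
  { unfold t. split. apply Rinv_0_lt_compat; lra. rewrite <- Rinv_1. apply Rinv_le_contravar; lra. }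
  assert (Hb0 : b <> 0) by lra.
  assert (HX : Rabs (b ^ 2 * A n b) <= Dn n * t ^ 2).
  { replace (Dn n * t ^ 2) with (Dn n / b ^ 2) by (unfold t; field; lra). apply w2A_decay; auto. }
  assert (Hc : Rabs (A (S n) b) <= Cm (S n) * t ^ 2).
  { replace (Cm (S n) * t ^ 2) with (Cm (S n) / b ^ 2) by (unfold t; field; lra). apply A_decay; auto; lia. }
  assert (HY : Rabs (b * A (S n) b) <= Cm (S n) * t).
  { rewrite Rabs_mult, Rabs_right by lra.
    replace (Cm (S n) * t) with (b * (Cm (S n) * t ^ 2)) by (unfold t; field; lra).
    apply Rmult_le_compat_l; lra. }
  pose proof (phi_bound (INR n) _ _ _ t (Dn n) (Cm (S n)) (INR_pos_1 n Hn) Ht (Dn_nonneg n Hn) (Cm_nonneg (S n)) HX Hc HY) as HP.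
  replace (Phi n b) with (- (b ^ 2 * A n b) ^ 2 / (4 * (INR n + 1)) + INR n * (b ^ 2 * A n b) * A (S n) b / (INR n + 1) +
      (INR n ^ 2 * (2 * INR n + 1) * A (S n) b ^ 2 + INR n ^ 2 * (b * A (S n) b) ^ 2) / (INR n + 1)).
  2: { unfold Phi. pose proof (INR_pos_1 n Hn). field. lra. }
  eapply Rle_trans. apply HP. fold (En n).
  pose proof (En_nonneg n Hn).
  replace (En n / b) with (t * En n) by (unfold t; field; lra).
  apply Rmult_le_compat_r; auto.
  apply Rle_trans with (t * 1). replace (t^2) with (t * t) by ring. apply Rmult_le_compat_l; lra. lra.
Qed.

Theorem mainTheorem11 (n : nat) (hn : (1 <= n)%nat) :
  (forall w : R, exists re im : R, IsFourierRe n w re /\ IsFourierIm n w im) /\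
  (forall Gre Gim : R -> R,
     (forall w, IsFourierRe n w (Gre w)) ->
     (forall w, IsFourierIm n w (Gim w)) ->
     ImproperInt0 (fun w => w ^ 3 * (Gre w ^ 2 + Gim w ^ 2))
       (2 * PI ^ 2 * INR n ^ 2 / 16 ^ n
          * Binomial.C (2 * n - 1) n * Binomial.C (2 * n + 1) n)).
Proof.
  split.
  - intros w. exists (A n w), 0. split.
    + apply Improper_of_LimR. intros; cont_tac. apply A_spec; auto.
    + apply Improper_of_LimR. intros; cont_tac. apply Im_spec; auto.
  - intros Gre Gim HRe HIm.
    assert (ERe : forall w, Gre w = A n w).
    { intros w. eapply LimR_unique. apply LimR_of_Improper, HRe. apply A_spec; auto. }
    assert (EIm : forall w, Gim w = 0).
    { intros w. eapply LimR_unique. apply LimR_of_Improper, HIm. apply Im_spec; auto. }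
    replace (fun w => w ^ 3 * (Gre w ^ 2 + Gim w ^ 2)) with (fun w => w ^ 3 * A n w ^ 2).
    2: { apply functional_extensionality. intros w. rewrite ERe, EIm. ring. }
    assert (HK : Phi n 0 = 2 * PI ^ 2 * INR n ^ 2 / 16 ^ n
          * Binomial.C (2 * n - 1) n * Binomial.C (2 * n + 1) n).
    { destruct n as [|k]. lia.
      unfold Phi. rewrite (A0_closed (S k)). rewrite C_2n1, C_2n1'.
      assert (E16 : 16 ^ S k = (4 ^ S k) ^ 2).
      { rewrite <- pow_mult, Nat.mul_comm, pow_mult. f_equal. ring. }
      rewrite E16.
      rewrite S_INR. pose proof (pos_INR k).
      assert (0 < 4 ^ S k) by (apply pow_lt; lra).
      field. lra. }
    rewrite <- HK.
    intros eps He.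
    pose proof (INR_pos_1 n hn).
    pose proof (En_nonneg n hn) as HE.
    exists (En n / eps + 1). intros b Hb.
    assert (Hb1 : 1 <= b) by (assert (0 <= En n / eps) by (apply Rdiv_le_0_compat; lra); lra).
    exists (Phi n 0 - Phi n b). split.
    + exists (ex_RInt_Reals_0 _ _ _ (exRI _ 0 b (fun x => f_cont n x hn))).
      rewrite <- RInt_Reals. apply RInt_f; auto. lra.
    + replace (Phi n 0 - Phi n b - Phi n 0) with (- Phi n b) by ring. rewrite Rabs_Ropp.
      eapply Rle_lt_trans. apply Phi_decay; auto.
      apply (Rmult_lt_reg_r b). lra. unfold Rdiv. rewrite Rmult_assoc, Rinv_l, Rmult_1_r by lra.
      assert (En n < eps * b).
      { assert (En n / eps * eps = En n) by (field; lra).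
        assert (En n / eps < b) by lra. nra. }
      lra.
Qed.
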